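(* Let $(X,d)$ be a compact metric space and $f\colon X\to X$ an equicontinuous map. The following are equivalent: (1) $f$ has the limit shadowing property; (2) $f$ has the shadowing property; (3) $\dim\Omega(f)=0$, equivalently $\Omega(f)$ is totally disconnected.
   Context: $f$ is equicontinuous if for every $\epsilon>0$ there is $\delta>0$ such that $d(x,y)\le\delta$ implies $\sup_{n\ge0}d(f^n(x),f^n(y))\le\epsilon$. A $\delta$-pseudo orbit is a sequence $(x_i)_{i\ge0}$ with $d(f(x_i),x_{i+1})\le\delta$ for all $i$; it is $\epsilon$-shadowed by $x$ if $d(x_i,f^i(x))\le\epsilon$ for all $i$. $f$ has the shadowing property if for every $\epsilon>0$ there is $\delta>0$ such that every $\delta$-pseudo orbit is $\epsilon$-shadowed by some point. $f$ has the limit shadowing property if for every sequence $(x_i)_{i\ge0}$ with $\lim_{i}d(f(x_i),x_{i+1})=0$ there is $y\in X$ with $\lim_i d(x_i,f^i(y))=0$. $\Omega(f)$ is the set of non-wandering points: $x$ such that for every neighborhood $U$ of $x$ there is $n>0$ with $f^n(U)\cap U\ne\emptyset$. *)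

(* Defs.v *)
From Stdlib Require Import Reals List.
Open Scope R_scope.

Section Metric.
Context {X : Type} (d : X -> X -> R).

Definition is_metric : Prop :=
  (forall x y, 0 <= d x y) /\
  (forall x y, d x y = 0 <-> x = y) /\
  (forall x y, d x y = d y x) /\
  (forall x y z, d x z <= d x y + d y z).

Definition is_open (U : X -> Prop) : Prop :=
  forall x, U x -> exists eps, 0 < eps /\ forall y, d x y < eps -> U y.

Definition compact_space : Prop :=
  forall (I : Type) (U : I -> X -> Prop),
    (forall i, is_open (U i)) ->
    (forall x, exists i, U i x) ->
    exists l : list I, forall x, exists i, In i l /\ U i x.

Definition equicontinuous (f : X -> X) : Prop :=
  forall eps, 0 < eps -> exists delta, 0 < delta /\
    forall x y, d x y <= delta -> forall n : nat,
      d (Nat.iter n f x) (Nat.iter n f y) <= eps.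

Definition pseudo_orbit (f : X -> X) (delta : R) (xs : nat -> X) : Prop :=
  forall i, d (f (xs i)) (xs (S i)) <= delta.

Definition eps_shadowed (f : X -> X) (eps : R) (xs : nat -> X) (x : X) : Prop :=
  forall i, d (xs i) (Nat.iter i f x) <= eps.

Definition shadowing (f : X -> X) : Prop :=
  forall eps, 0 < eps -> exists delta, 0 < delta /\
    forall xs, pseudo_orbit f delta xs -> exists x, eps_shadowed f eps xs x.

Definition limit_shadowing (f : X -> X) : Prop :=
  forall xs : nat -> X,
    Un_cv (fun i => d (f (xs i)) (xs (S i))) 0 ->
    exists y, Un_cv (fun i => d (xs i) (Nat.iter i f y)) 0.

(** non-wandering points: every neighbourhood U of x (equivalently, every open
    ball around x) satisfies f^n(U) ∩ U ≠ ∅ for some n > 0 *)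
Definition nonwandering (f : X -> X) (x : X) : Prop :=
  forall eps, 0 < eps -> exists n y, (0 < n)%nat /\
    d x y < eps /\ d x (Nat.iter n f y) < eps.

Definition rel_open (A W : X -> Prop) : Prop :=
  forall y, A y -> W y -> exists delta, 0 < delta /\
    forall z, A z -> d y z < delta -> W z.

Definition rel_clopen (A W : X -> Prop) : Prop :=
  (forall y, W y -> A y) /\ rel_open A W /\ rel_open A (fun z => ~ W z).

(** small inductive dimension of the subspace A is <= 0: A has a base of
    relatively clopen sets *)
Definition dim_zero (A : X -> Prop) : Prop :=
  forall x, A x -> forall eps, 0 < eps ->
    exists W, rel_clopen A W /\ W x /\ forall z, W z -> d x z < eps.

Definition connected_set (C : X -> Prop) : Prop :=
  forall P Q : X -> Prop, rel_open C P -> rel_open C Q ->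
    (forall x, C x -> P x \/ Q x) ->
    (forall x, C x -> P x -> Q x -> False) ->
    (forall x, C x -> P x) \/ (forall x, C x -> Q x).

Definition totally_disconnected (A : X -> Prop) : Prop :=
  forall C : X -> Prop, (forall x, C x -> A x) -> connected_set C ->
    forall x y, C x -> C y -> x = y.

End Metric.

(* Main.v *)
Require Import Defs.
From Stdlib Require Import Reals List Lra Lia Classical IndefiniteDescription ZArith.
Open Scope R_scope.

Lemma choice_fun {A B : Type} (P : A -> B -> Prop) :
  (forall a, exists b, P a b) -> exists g : A -> B, forall a, P a (g a).
Proof.
  intros H. exists (fun a => proj1_sig (constructive_indefinite_description _ (H a))).
  intros a. exact (proj2_sig (constructive_indefinite_description _ (H a))).
Qed.

Lemma archi : forall e, 0 < e -> exists N : nat, / INR (S N) < e.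
Proof.
  intros e He. destruct (archimed (/ e)) as [H1 _].
  assert (Hp : 0 < / e) by (apply Rinv_0_lt_compat; lra).
  assert (Hz : (0 <= up (/ e))%Z).
  { apply le_IZR. simpl. lra. }
  exists (Z.to_nat (up (/ e))).
  rewrite S_INR, INR_IZR_INZ, Z2Nat.id by exact Hz.
  rewrite <- (Rinv_inv e) at 2.
  apply Rinv_lt_contravar.
  - apply Rmult_lt_0_compat; lra.
  - lra.
Qed.

Lemma inv_S_pos : forall n, 0 < / INR (S n).
Proof. intros n. apply Rinv_0_lt_compat. apply lt_0_INR. lia. Qed.

Lemma inv_S_le : forall n m, (n <= m)%nat -> / INR (S m) <= / INR (S n).
Proof.
  intros n m H. apply Rinv_le_contravar. apply lt_0_INR; lia. apply le_INR; lia.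
Qed.

Lemma list_min {A : Type} (Q : A -> R -> Prop) :
  (forall a e e', Q a e -> 0 < e' -> e' <= e -> Q a e') ->
  forall l : list A, (forall a, In a l -> exists e, 0 < e /\ Q a e) ->
  exists e, 0 < e /\ forall a, In a l -> Q a e.
Proof.
  intros Hmono l. induction l as [|a l IH]; intros H.
  - exists 1. split. lra. intros a [].
  - destruct IH as [e1 [He1 H1]].
    { intros b Hb. apply H. right. exact Hb. }
    destruct (H a (or_introl eq_refl)) as [e2 [He2 H2]].
    exists (Rmin e1 e2). split. apply Rmin_pos; lra.
    intros b [<-|Hb].
    + apply (Hmono _ e2). exact H2. apply Rmin_pos; lra. apply Rmin_r.
    + apply (Hmono _ e1). apply H1, Hb. apply Rmin_pos; lra. apply Rmin_l.
Qed.

Lemma list_max {A : Type} (g : A -> nat) (l : list A) :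
  exists M, forall a, In a l -> (g a <= M)%nat.
Proof.
  induction l as [|a l [M HM]].
  - exists 0%nat. intros a [].
  - exists (Nat.max (g a) M). intros b [<-|Hb]. lia. specialize (HM b Hb). lia.
Qed.

Open Scope nat_scope.


Fixpoint posf (nn : nat -> nat) (i : nat) : nat * nat :=
  match i with
  | 0 => (0, 0)
  | S i' => let (k, j) := posf nn i' in if Nat.ltb (S j) (nn k) then (k, S j) else (S k, 0)
  end.

Section Pos.
Variable nn : nat -> nat.
Hypothesis Hnn : forall k, 1 <= nn k.

Lemma pos_lt i : snd (posf nn i) < nn (fst (posf nn i)).
Proof.
  induction i; simpl. apply Hnn.
  destruct (posf nn i) as [k j]. destruct (Nat.ltb (S j) (nn k)) eqn:E; simpl.
  apply Nat.ltb_lt, E. apply Hnn.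
Qed.

Lemma pos_step i k j : posf nn i = (k, j) ->
  (posf nn (S i) = (k, S j) /\ S j < nn k) \/ (posf nn (S i) = (S k, 0) /\ S j = nn k).
Proof.
  intros E. pose proof (pos_lt i) as L. rewrite E in L. simpl in L. simpl. rewrite E.
  destruct (Nat.ltb (S j) (nn k)) eqn:E2.
  - left. split. auto. apply Nat.ltb_lt, E2.
  - right. split. auto. apply Nat.ltb_ge in E2. lia.
Qed.

Lemma pos_fst_mono i : fst (posf nn i) <= fst (posf nn (S i)).
Proof.
  destruct (posf nn i) as [k j] eqn:E. destruct (pos_step i k j E) as [[H _]|[H _]]; rewrite H; simpl; lia.
Qed.

Lemma pos_mono i i' : i <= i' -> fst (posf nn i) <= fst (posf nn i').
Proof.
  intros H. induction H. lia. pose proof (pos_fst_mono m). lia.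
Qed.

Lemma pos_fst_le i : fst (posf nn i) <= i.
Proof.
  induction i. simpl. lia.
  destruct (posf nn i) as [k j] eqn:E. destruct (pos_step i k j E) as [[H _]|[H _]]; rewrite H; simpl in *; lia.
Qed.

Lemma pos_within i k : posf nn i = (k, 0) -> forall j, j < nn k -> posf nn (i + j) = (k, j).
Proof.
  intros E j. induction j; intros Hj. rewrite Nat.add_0_r. exact E.
  rewrite Nat.add_succ_r. destruct (pos_step (i + j) k j (IHj ltac:(lia))) as [[H _]|[H H']].
  exact H. lia.
Qed.

Lemma pos_next i k : posf nn i = (k, 0) -> posf nn (i + nn k) = (S k, 0).
Proof.
  intros E. pose proof (Hnn k).
  replace (i + nn k) with (S (i + (nn k - 1))) by lia.
  pose proof (pos_within i k E (nn k - 1) ltac:(lia)).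
  destruct (pos_step _ _ _ H0) as [[_ H1]|[H1 _]]. lia. exact H1.
Qed.

Lemma pos_reach k : exists i, posf nn i = (k, 0).
Proof.
  induction k. exists 0. reflexivity. destruct IHk as [i Hi]. exists (i + nn k). apply pos_next, Hi.
Qed.
End Pos.

Open Scope R_scope.
Section Main.
Variable X : Type.
Variable d : X -> X -> R.
Hypothesis Hm : is_metric d.
Hypothesis Hc : compact_space d.
Variable f : X -> X.
Hypothesis He : equicontinuous d f.

Notation it n x := (Nat.iter n f x).

Lemma d_pos : forall x y, 0 <= d x y.
Proof. destruct Hm as [H _]. exact H. Qed.
Lemma d_refl : forall x, d x x = 0.
Proof. destruct Hm as [_ [H _]]. intros x. apply H. reflexivity. Qed.
Lemma d_eq : forall x y, d x y = 0 -> x = y.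
Proof. destruct Hm as [_ [H _]]. intros x y. apply H. Qed.
Lemma d_sym : forall x y, d x y = d y x.
Proof. destruct Hm as [_ [_ [H _]]]. exact H. Qed.
Lemma d_tri : forall x y z, d x z <= d x y + d y z.
Proof. destruct Hm as [_ [_ [_ H]]]. exact H. Qed.

Lemma d_small_eq : forall x y, (forall e, 0 < e -> d x y < e) -> x = y.
Proof.
  intros x y H. apply d_eq. pose proof (d_pos x y).
  destruct (Req_dec (d x y) 0) as [E|E]; auto.
  specialize (H (d x y) ltac:(lra)). lra.
Qed.

Lemma itP : forall n m x, it n (it m x) = it (n + m) x.
Proof. intros. rewrite Nat.iter_add. reflexivity. Qed.
Lemma itS : forall n x, it n (f x) = it (S n) x.
Proof. intros. rewrite Nat.iter_succ_r. reflexivity. Qed.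
Lemma itS' : forall n x, f (it n x) = it (S n) x.
Proof. reflexivity. Qed.

Lemma eqc : forall e, 0 < e -> exists dl, 0 < dl /\ dl <= e /\
  forall x y, d x y <= dl -> forall n, d (it n x) (it n y) <= e.
Proof.
  intros e He0. destruct (He e He0) as [dl [Hdl H]].
  exists (Rmin dl e). split. apply Rmin_pos; lra. split. apply Rmin_r.
  intros x y Hxy n. apply H. eapply Rle_trans. exact Hxy. apply Rmin_l.
Qed.


Lemma cluster (P : nat -> Prop) (s : nat -> X) :
  (forall N, exists n, (N <= n)%nat /\ P n) ->
  exists c, forall r, 0 < r -> forall N, exists n, (N <= n)%nat /\ P n /\ d c (s n) < r.
Proof.
  intros HP. apply NNPP. intros Hn.
  assert (H : forall c, exists r N, 0 < r /\ forall n, (N <= n)%nat -> P n -> r <= d c (s n)).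
  { intros c. apply NNPP. intros Hc'. apply Hn. exists c. intros r Hr N.
    apply NNPP. intros Hx. apply Hc'. exists r, N. split. exact Hr.
    intros n Hn1 Hn2. apply Rnot_lt_le. intros Hlt. apply Hx. exists n. auto. }
  set (I := {p : X * R * nat | 0 < snd (fst p) /\ forall n, (snd p <= n)%nat -> P n -> snd (fst p) <= d (fst (fst p)) (s n)}).
  set (U := fun (i : I) z => d (fst (fst (proj1_sig i))) z < snd (fst (proj1_sig i))).
  destruct (Hc I U) as [l Hl].
  - intros [[[c r] N] [Hr HN]] z Hz. unfold U in *; simpl in *.
    exists (r - d c z). split. lra. intros y Hy. pose proof (d_tri c z y). lra.
  - intros x. destruct (H x) as [r [N [Hr HN]]].
    exists (exist _ ((x, r), N) (conj Hr HN)). unfold U; simpl. rewrite d_refl. exact Hr.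
  - destruct (list_max (fun i : I => snd (proj1_sig i)) l) as [M HM].
    destruct (HP M) as [n [HnM Pn]].
    destruct (Hl (s n)) as [i [Hi Ui]].
    destruct i as [[[c r] N] [Hr HN]]. unfold U in Ui; simpl in *.
    specialize (HM _ Hi). simpl in HM.
    pose proof (HN n ltac:(lia) Pn). lra.
Qed.

Lemma cluster1 (s : nat -> X) :
  exists c, forall r, 0 < r -> forall N, exists n, (N <= n)%nat /\ d c (s n) < r.
Proof.
  destruct (cluster (fun _ => True) s) as [c Hc'].
  - intros N. exists N. split; auto.
  - exists c. intros r Hr N. destruct (Hc' r Hr N) as [n [H1 [_ H2]]]. eauto.
Qed.

Definition closed (K : X -> Prop) := forall c, (forall r, 0 < r -> exists a, K a /\ d c a < r) -> K c.

Lemma closed_compl_open K : closed K -> is_open d (fun z => ~ K z).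
Proof.
  intros HK z Hz. apply NNPP. intros Hn. apply Hz. apply HK. intros r Hr.
  apply NNPP. intros Hn2. apply Hn. exists r. split. exact Hr.
  intros y Hy Ky. apply Hn2. exists y. auto.
Qed.

Lemma finite_cover (K : X -> Prop) (I : Type) (G : I -> X -> Prop) :
  closed K -> (forall i, is_open d (G i)) -> (forall z, K z -> exists i, G i z) ->
  exists l : list I, forall z, K z -> exists i, In i l /\ G i z.
Proof.
  intros HK HG Hcov.
  set (U := fun (o : option I) z => match o with None => ~ K z | Some i => G i z end).
  destruct (Hc (option I) U) as [l Hl].
  - intros [i|]; simpl. apply HG. apply closed_compl_open, HK.
  - intros z. destruct (classic (K z)) as [Kz|Kz].
    + destruct (Hcov z Kz) as [i Hi]. exists (Some i). exact Hi.
    + exists None. exact Kz.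
  - exists (flat_map (fun o => match o with Some i => i :: nil | None => nil end) l).
    intros z Kz. destruct (Hl z) as [[i|] [Hi Ui]].
    + exists i. split. apply in_flat_map. exists (Some i). split. exact Hi. left. reflexivity. exact Ui.
    + simpl in Ui. contradiction.
Qed.

Definition thick (A B : X -> Prop) z := exists a dl, A a /\ B a /\ 0 < dl /\
  (forall z', A z' -> d a z' < dl -> B z') /\ d a z < dl / 2.

Lemma thick_open A B : is_open d (thick A B).
Proof.
  intros z [a [dl [Aa [Ba [Hdl [H Hz]]]]]].
  exists (dl / 2 - d a z). split. lra. intros y Hy.
  exists a, dl. repeat split; auto. pose proof (d_tri a z y). lra.
Qed.

Lemma thick_sub A B z : A z -> thick A B z -> B z.
Proof.
  intros Az [a [dl [Aa [Ba [Hdl [H Hz]]]]]]. apply H. exact Az. lra.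
Qed.

Lemma sub_thick A B z : rel_open d A B -> A z -> B z -> thick A B z.
Proof.
  intros HB Az Bz. destruct (HB z Az Bz) as [dl [Hdl H]].
  exists z, dl. repeat split; auto. rewrite d_refl. lra.
Qed.

Lemma open_const_and (P : Prop) (O : X -> Prop) : is_open d O -> is_open d (fun z => P /\ O z).
Proof.
  intros HO z [p Oz]. destruct (HO z Oz) as [e [He' H]]. exists e. split. exact He'.
  intros y Hy. split. exact p. apply H, Hy.
Qed.

Notation Om := (nonwandering d f).

Lemma Om_rec x : Om x -> forall e, 0 < e -> exists n, (0 < n)%nat /\ d x (it n x) < e.
Proof.
  intros Hx e He0. destruct (eqc (e/2)) as [dl [Hdl [Hdle H]]]. lra.
  destruct (Hx dl Hdl) as [n [y [Hn [H1 H2]]]].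
  exists n. split. exact Hn.
  pose proof (H x y ltac:(lra) n). pose proof (d_tri x (it n y) (it n x)).
  rewrite (d_sym (it n y)) in H3. lra.
Qed.

Lemma rec_Om x : (forall e, 0 < e -> exists n, (0 < n)%nat /\ d x (it n x) < e) -> Om x.
Proof.
  intros H e He0. destruct (H e He0) as [n [Hn Hd]]. exists n, x. rewrite d_refl. auto.
Qed.

Lemma Om_closed : closed Om.
Proof.
  intros c H e He0. destruct (H (e/2)) as [a [Ha Hca]]. lra.
  destruct (Ha (e/2)) as [n [y [Hn [H1 H2]]]]. lra.
  exists n, y. split. exact Hn. pose proof (d_tri c a y). pose proof (d_tri c a (it n y)). lra.
Qed.

Lemma Om_inv x : Om x -> Om (f x).
Proof.
  intros Hx. apply rec_Om. intros e He0.
  destruct (eqc (e/2)) as [dl [Hdl [Hdle H]]]. lra.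
  destruct (Om_rec x Hx dl Hdl) as [n [Hn Hd]].
  exists n. split. exact Hn. pose proof (H x (it n x) ltac:(lra) 1%nat). simpl in H0.
  rewrite itS. simpl. lra.
Qed.

Lemma Om_it n x : Om x -> Om (it n x).
Proof. induction n; simpl; auto. intros. apply Om_inv. auto. Qed.

Lemma finite_min (g : nat -> R) : forall N,
  (forall e, 0 < e -> exists n, (n < N)%nat /\ (0 < n)%nat /\ g n < e) ->
  exists n, (n < N)%nat /\ (0 < n)%nat /\ g n <= 0.
Proof.
  induction N as [|N IH]; intros H.
  - destruct (H 1 ltac:(lra)) as [n [Hn _]]. lia.
  - destruct (classic ((0 < N)%nat /\ g N <= 0)) as [[H1 H2]|Hn].
    + exists N. auto.
    + destruct IH as [n [H1 [H2 H3]]].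
      * intros e He0. destruct (classic (0 < N)%nat) as [HN|HN].
        -- assert (gN : 0 < g N). { apply Rnot_le_lt. intro. apply Hn. auto. }
           destruct (H (Rmin e (g N))) as [n [H1 [H2 H3]]]. apply Rmin_pos; lra.
           exists n. assert (n <> N). { intro; subst. pose proof (Rmin_r e (g N)). lra. }
           repeat split; try lia. pose proof (Rmin_l e (g N)). lra.
        -- destruct (H e He0) as [n [H1 [H2 H3]]]. lia.
      * exists n. repeat split; auto; lia.
Qed.

Lemma large (g : nat -> R) : (forall n, 0 <= g n) ->
  (forall e, 0 < e -> exists n, (0 < n)%nat /\ g n < e) ->
  (forall n k, g n = 0 -> g (k * n)%nat = 0) ->
  forall e, 0 < e -> forall N, exists n, (N <= n)%nat /\ (0 < n)%nat /\ g n < e.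
Proof.
  intros Hpos Hsm Hmul e He0 N. apply NNPP. intros Hn.
  assert (H : forall n, (N <= n)%nat -> (0 < n)%nat -> e <= g n).
  { intros n H1 H2. apply Rnot_lt_le. intro. apply Hn. exists n. auto. }
  destruct (finite_min g N) as [n [H1 [H2 H3]]].
  - intros e' He'. destruct (Hsm (Rmin e e')) as [n [H1 H2]]. apply Rmin_pos; lra.
    exists n. repeat split; auto.
    + destruct (Nat.lt_ge_cases n N) as [|HH]; auto. pose proof (H n HH H1).
      pose proof (Rmin_l e e'). lra.
    + pose proof (Rmin_r e e'). lra.
  - assert (g n = 0) by (pose proof (Hpos n); lra).
    pose proof (Hmul n N H0). pose proof (H (N * n)%nat ltac:(nia) ltac:(nia)). lra.
Qed.

Lemma it_mul n x : it n x = x -> forall k, it (k * n) x = x.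
Proof.
  intros H k. induction k. reflexivity.
  simpl. rewrite Nat.iter_add, IHk. exact H.
Qed.

Lemma rec_large x : Om x -> forall e, 0 < e -> forall N, exists n, (N <= n)%nat /\ (0 < n)%nat /\ d x (it n x) < e.
Proof.
  intros Hx. apply large.
  - intros; apply d_pos.
  - apply Om_rec, Hx.
  - intros n k H. apply d_eq in H. rewrite (it_mul n x (eq_sym H)). apply d_refl.
Qed.

Lemma pair_rec x y : Om x -> Om y -> forall e, 0 < e ->
  exists p, (0 < p)%nat /\ d x (it p x) < e /\ d y (it p y) < e.
Proof.
  intros Hx Hy e He0. destruct (eqc (e/4)) as [dl [Hdl [Hdle H]]]. lra.
  destruct (cluster1 (fun n => it n x)) as [c1 Hc1].
  destruct (cluster (fun n => d c1 (it n x) < dl/2) (fun n => it n y)) as [c2 Hc2].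
  { intros N. destruct (Hc1 (dl/2) ltac:(lra) N) as [n [H1 H2]]. eauto. }
  destruct (Hc2 (dl/2) ltac:(lra) 0%nat) as [a [_ [Ha1 Ha2]]].
  destruct (Hc2 (dl/2) ltac:(lra) (S a)) as [b [Hb [Hb1 Hb2]]].
  exists (b - a)%nat. split. lia.
  assert (Eb : forall z, it b z = it (b - a) (it a z)).
  { intros z. rewrite itP. f_equal. lia. }
  assert (key : forall z, Om z -> d (it a z) (it b z) < dl -> d z (it (b - a) z) < e).
  { intros z Hz Hab. destruct (rec_large z Hz dl Hdl a) as [j [Hj1 [_ Hj2]]].
    assert (E1 : d (it j z) (it (b - a + j) z) <= e/4).
    { replace (b - a + j)%nat with ((j - a) + b)%nat by lia.
      replace (it j z) with (it (j - a) (it a z)) by (rewrite itP; f_equal; lia).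
      rewrite <- itP. apply H. lra. }
    assert (E2 : d (it (b - a) z) (it (b - a + j) z) <= e/4).
    { rewrite <- itP. apply H. lra. }
    pose proof (d_tri z (it j z) (it (b - a) z)).
    pose proof (d_tri (it j z) (it (b - a + j) z) (it (b - a) z)).
    rewrite (d_sym (it (b - a + j) z) (it (b - a) z)) in H1. lra. }
  split.
  - apply key. exact Hx. pose proof (d_tri (it a x) c1 (it b x)). rewrite (d_sym _ c1) in H0. lra.
  - apply key. exact Hy. pose proof (d_tri (it a y) c2 (it b y)). rewrite (d_sym _ c2) in H0. lra.
Qed.

Lemma pair_large x y : Om x -> Om y -> forall e, 0 < e -> forall N,
  exists n, (N <= n)%nat /\ d x (it n x) < e /\ d y (it n y) < e.
Proof.
  intros Hx Hy e He0 N.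
  destruct (large (fun n => Rmax (d x (it n x)) (d y (it n y)))) with (e := e) (N := N)
    as [n [H1 [_ H2]]].
  - intros n. pose proof (d_pos x (it n x)). pose proof (Rmax_l (d x (it n x)) (d y (it n y))). lra.
  - intros e' He'. destruct (pair_rec x y Hx Hy e' He') as [p [Hp [A B]]].
    exists p. split. auto. apply Rmax_lub_lt; auto.
  - intros n k H. pose proof (Rmax_l (d x (it n x)) (d y (it n y))).
    pose proof (Rmax_r (d x (it n x)) (d y (it n y))).
    pose proof (d_pos x (it n x)). pose proof (d_pos y (it n y)).
    assert (E1 : d x (it n x) = 0) by lra. assert (E2 : d y (it n y) = 0) by lra.
    apply d_eq in E1. apply d_eq in E2.
    rewrite (it_mul n x (eq_sym E1)), (it_mul n y (eq_sym E2)). rewrite !d_refl.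
    apply Rmax_left. lra.
  - exact He0.
  - exists n. split. auto. split.
    + pose proof (Rmax_l (d x (it n x)) (d y (it n y))). lra.
    + pose proof (Rmax_r (d x (it n x)) (d y (it n y))). lra.
Qed.

Lemma cluster_Om c z : (forall r, 0 < r -> forall N, exists n, (N <= n)%nat /\ d c (it n z) < r) -> Om c.
Proof.
  intros H. apply rec_Om. intros e He0.
  destruct (eqc (e/2)) as [dl [Hdl [Hdle Hq]]]. lra.
  destruct (H dl Hdl 0%nat) as [n1 [_ H1]].
  destruct (H dl Hdl (S n1)) as [n2 [Hn2 H2]].
  exists (n2 - n1)%nat. split. lia.
  assert (E : it n2 z = it (n2 - n1) (it n1 z)) by (rewrite itP; f_equal; lia).
  pose proof (Hq (it n1 z) c ltac:(rewrite d_sym; lra) (n2 - n1)%nat).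
  rewrite <- E in H0. pose proof (d_tri c (it n2 z) (it (n2 - n1) c)). lra.
Qed.

Lemma Om_surj x : Om x -> exists c, Om c /\ f c = x.
Proof.
  intros Hx.
  destruct (choice_fun (fun k n => (k <= n)%nat /\ (0 < n)%nat /\ d x (it n x) < / INR (S k))) as [t Ht].
  { intros k. apply rec_large. exact Hx. apply inv_S_pos. }
  destruct (cluster1 (fun k => it (t k - 1) x)) as [c Hc'].
  exists c. split.
  - apply (cluster_Om c x). intros r Hr N. destruct (Hc' r Hr (S N)) as [k [Hk Hd]].
    exists (t k - 1)%nat. split. destruct (Ht k). lia. exact Hd.
  - apply d_small_eq. intros e He0.
    destruct (eqc (e/2)) as [dl [Hdl [Hdle Hq]]]. lra.
    destruct (archi (e/2)) as [N HN]. lra.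
    destruct (Hc' dl Hdl N) as [k [Hk Hd]].
    destruct (Ht k) as [H1 [H2 H3]].
    pose proof (Hq c (it (t k - 1) x) ltac:(lra) 1%nat). simpl in H.
    assert (E : f (it (t k - 1) x) = it (t k) x).
    { rewrite itS'. f_equal. lia. }
    rewrite E in H. pose proof (inv_S_le N k Hk).
    pose proof (d_tri (f c) (it (t k) x) x). rewrite (d_sym (it (t k) x) x) in H4. lra.
Qed.

Lemma Om_surj_it n x : Om x -> exists c, Om c /\ it n c = x.
Proof.
  revert x. induction n; intros x Hx.
  - exists x. auto.
  - destruct (IHn x Hx) as [c' [Hc' E]]. destruct (Om_surj c' Hc') as [c [HcO Ec]].
    exists c. split. auto. rewrite <- itS, Ec. exact E.
Qed.

Lemma attract : forall g, 0 < g -> exists N, forall x, exists p, Om p /\ d (it N x) p < g.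
Proof.
  intros g Hg. apply NNPP. intros Hn.
  assert (H : forall N, exists x, forall p, Om p -> g <= d (it N x) p).
  { intros N. apply NNPP. intros H1. apply Hn. exists N. intros x. apply NNPP. intros H2.
    apply H1. exists x. intros p Hp. apply Rnot_lt_le. intro. apply H2. eauto. }
  destruct (choice_fun _ H) as [xs Hxs].
  destruct (cluster1 xs) as [z Hz].
  destruct (eqc (g/3)) as [dl [Hdl [Hdle Hq]]]. lra.
  destruct (cluster (fun n => d z (xs n) < dl) (fun n => it n z)) as [c Hc'].
  { intros N. destruct (Hz dl Hdl N) as [n [H1 H2]]. eauto. }
  assert (HcO : Om c).
  { apply (cluster_Om c z). intros r Hr N. destruct (Hc' r Hr N) as [n [H1 [_ H2]]]. eauto. }
  destruct (Hc' (g/3) ltac:(lra) 0%nat) as [n [_ [H1 H2]]].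
  cbv beta in H1. pose proof (Hxs n c HcO). pose proof (Hq z (xs n) ltac:(lra) n).
  pose proof (d_tri (it n (xs n)) (it n z) c). rewrite (d_sym (it n (xs n)) (it n z)) in H4.
  rewrite (d_sym c) in H2. lra.
Qed.

Lemma drift : forall eta, 0 < eta -> exists dl, 0 < dl /\ forall z, pseudo_orbit d f dl z ->
  forall k i, d (z (k + i)%nat) (it k (z i)) <= INR k * eta.
Proof.
  intros eta Heta. destruct (eqc eta Heta) as [dl [Hdl [_ Hq]]].
  exists dl. split. exact Hdl. intros z Hz k. induction k; intros i.
  - simpl. rewrite d_refl. lra.
  - replace (S k + i)%nat with (k + S i)%nat by lia.
    pose proof (IHk (S i)).
    pose proof (Hq (z (S i)) (f (z i)) ltac:(rewrite d_sym; apply Hz) k).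
    rewrite itS in H0. pose proof (d_tri (z (k + S i)%nat) (it k (z (S i))) (it (S k) (z i))).
    rewrite S_INR. lra.
Qed.

Lemma sep_pts x y : Om x -> Om y -> forall z, 0 < z -> exists th, 0 < th /\
  forall w t1 t2, d (it t1 x) (it t1 w) <= th -> d (it t2 y) (it t2 w) <= th -> d x y <= 4 * z.
Proof.
  intros Hx Hy z Hz. destruct (eqc z Hz) as [th [Hth [_ Hq]]].
  exists th. split. exact Hth. intros w t1 t2 H1 H2.
  destruct (pair_large x y Hx Hy z Hz (t1 + t2)) as [n [Hn [A B]]].
  pose proof (Hq _ _ H1 (n - t1)%nat). pose proof (Hq _ _ H2 (n - t2)%nat).
  rewrite !itP in H, H0. replace (n - t1 + t1)%nat with n in H by lia.
  replace (n - t2 + t2)%nat with n in H0 by lia.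
  pose proof (d_tri x (it n x) y). pose proof (d_tri (it n x) (it n w) y).
  pose proof (d_tri (it n w) (it n y) y). rewrite (d_sym (it n y) y) in H5.
  rewrite (d_sym (it n y) (it n w)) in H0. lra.
Qed.

Definition chain (mu : R) (x z : X) := exists (c : nat -> X) (m : nat), c 0%nat = x /\ c m = z /\
  forall i, (i < m)%nat -> d (c i) (c (S i)) < mu.

Lemma chain_ext mu x z z' : chain mu x z -> d z z' < mu -> chain mu x z'.
Proof.
  intros [c [m [H0 [Hm' Hs]]]] Hz.
  exists (fun i => if Nat.leb i m then c i else z'), (S m).
  split. simpl. exact H0. split.
  - destruct (Nat.leb (S m) m) eqn:E. apply Nat.leb_le in E. lia. reflexivity.
  - intros i Hi. destruct (Nat.leb i m) eqn:E1; [|apply Nat.leb_gt in E1; lia].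
    destruct (Nat.leb (S i) m) eqn:E2.
    + apply Hs. apply Nat.leb_le in E2. lia.
    + apply Nat.leb_gt in E2. replace i with m by lia. rewrite Hm'. exact Hz.
Qed.

Lemma chain_conn C mu x y : 0 < mu -> connected_set d C -> C x -> C y -> chain mu x y.
Proof.
  intros Hmu HC Cx Cy.
  destruct (HC (chain mu x) (fun z => ~ chain mu x z)) as [H|H].
  - intros z _ Hz. exists mu. split. exact Hmu. intros z' _ Hz'. eapply chain_ext; eauto.
  - intros z _ Hz. exists mu. split. exact Hmu. intros z' _ Hz' Hc'. apply Hz.
    eapply chain_ext. exact Hc'. rewrite d_sym. exact Hz'.
  - intros z _. apply classic.
  - intros z _ H1 H2. auto.
  - apply H, Cy.
  - exfalso. apply (H x Cx). exists (fun _ => x), 0%nat. repeat split. intros; lia.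
Qed.

Lemma sh_TD : shadowing d f -> totally_disconnected d Om.
Proof.
  intros Hsh C HCO HC x y Cx Cy. apply NNPP. intros Hxy.
  assert (Hr : 0 < d x y).
  { pose proof (d_pos x y). destruct (Req_dec (d x y) 0) as [E|E]. apply d_eq in E. contradiction. lra. }
  destruct (sep_pts x y (HCO x Cx) (HCO y Cy) (d x y / 5)) as [th [Hth Hsep]]. lra.
  destruct (Hsh th Hth) as [dl [Hdl Hsh']].
  destruct (eqc dl Hdl) as [mu [Hmu [_ Hq]]].
  destruct (chain_conn C mu x y Hmu HC Cx Cy) as [c [m [H0 [Hm' Hs]]]].
  set (b := fun i => if Nat.leb i m then c i else y).
  destruct (Hsh' (fun i => it i (b i))) as [w Hw].
  - intros i. rewrite itS'. destruct (Nat.lt_ge_cases i m) as [Hi|Hi].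
    + unfold b. replace (Nat.leb i m) with true by (symmetry; apply Nat.leb_le; lia).
      replace (Nat.leb (S i) m) with true by (symmetry; apply Nat.leb_le; lia).
      apply Hq. left. apply Hs, Hi.
    + assert (b i = y). { unfold b. destruct (Nat.leb i m) eqn:E; auto. apply Nat.leb_le in E.
        replace i with m by lia. exact Hm'. }
      assert (b (S i) = y). { unfold b. destruct (Nat.leb (S i) m) eqn:E; auto. apply Nat.leb_le in E. lia. }
      rewrite H, H1, d_refl. lra.
  - pose proof (Hw 0%nat) as H. pose proof (Hw m) as H3. cbv beta in H, H3.
    assert (b 0%nat = x). { unfold b. simpl. exact H0. }
    assert (b m = y). { unfold b. rewrite (proj2 (Nat.leb_le m m) (le_n m)). exact Hm'. }
    rewrite H1 in H. rewrite H2 in H3.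
    pose proof (Hsep w 0%nat m H H3). lra.
Qed.

Lemma walk (x y : X) (mu : nat -> R) : (forall k, 0 < mu k) ->
  (forall k, chain (mu k) x y) -> (forall k, chain (mu k) y x) ->
  exists b : nat -> X,
    (forall K, exists I, forall i, (I <= i)%nat -> exists k, (K <= k)%nat /\ d (b i) (b (S i)) < mu k) /\
    (forall I, exists i, (I <= i)%nat /\ b i = x) /\
    (forall I, exists i, (I <= i)%nat /\ b i = y).
Proof.
  intros Hmu H1 H2.
  destruct (choice_fun (fun k (p : (nat -> X) * nat) => fst p 0%nat = x /\ fst p (snd p) = y /\
     forall i, (i < snd p)%nat -> d (fst p i) (fst p (S i)) < mu k)) as [P1 HP1].
  { intros k. destruct (H1 k) as [c [m H]]. exists (c, m). exact H. }
  destruct (choice_fun (fun k (p : (nat -> X) * nat) => fst p 0%nat = y /\ fst p (snd p) = x /\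
     forall i, (i < snd p)%nat -> d (fst p i) (fst p (S i)) < mu k)) as [P2 HP2].
  { intros k. destruct (H2 k) as [c [m H]]. exists (c, m). exact H. }
  set (c1 := fun k => fst (P1 k)). set (m1 := fun k => snd (P1 k)).
  set (c2 := fun k => fst (P2 k)). set (m2 := fun k => snd (P2 k)).
  set (LL := fun k j => if Nat.leb j (m1 k) then c1 k j else
                        if Nat.leb j (m1 k + m2 k) then c2 k (j - m1 k)%nat else x).
  set (nn := fun k => (m1 k + m2 k + 1)%nat).
  assert (Hnn : forall k, (1 <= nn k)%nat) by (intros; unfold nn; lia).
  assert (L0 : forall k, LL k 0%nat = x).
  { intros k. unfold LL. simpl. apply (HP1 k). }
  assert (Lend : forall k, LL k (nn k) = x).
  { intros k. unfold LL, nn. destruct (Nat.leb _ (m1 k)) eqn:E. apply Nat.leb_le in E. lia.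
    destruct (Nat.leb _ (m1 k + m2 k)) eqn:E2. apply Nat.leb_le in E2. lia. reflexivity. }
  assert (Ly : forall k, LL k (m1 k) = y).
  { intros k. unfold LL. rewrite (proj2 (Nat.leb_le _ _) (le_n _)). apply (HP1 k). }
  assert (Lmid : forall k j, (m1 k <= j <= m1 k + m2 k)%nat -> LL k j = c2 k (j - m1 k)%nat).
  { intros k j Hj. unfold LL. destruct (Nat.leb j (m1 k)) eqn:E.
    - apply Nat.leb_le in E. replace j with (m1 k) by lia. rewrite Nat.sub_diag.
      destruct (HP1 k) as [_ [A _]]. destruct (HP2 k) as [B _]. unfold c1, c2, m1 in *. rewrite A, B. reflexivity.
    - rewrite (proj2 (Nat.leb_le _ _) (proj2 Hj)). reflexivity. }
  assert (Lstep : forall k j, (j < nn k)%nat -> d (LL k j) (LL k (S j)) < mu k).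
  { intros k j Hj. unfold nn in Hj. destruct (Nat.lt_ge_cases j (m1 k)) as [A|A].
    - unfold LL. rewrite (proj2 (Nat.leb_le j (m1 k))) by lia.
      rewrite (proj2 (Nat.leb_le (S j) (m1 k))) by lia. apply (HP1 k). exact A.
    - destruct (Nat.lt_ge_cases j (m1 k + m2 k)) as [B|B].
      + rewrite (Lmid k j) by lia. rewrite (Lmid k (S j)) by lia. replace (S j - m1 k)%nat with (S (j - m1 k)) by lia. apply (HP2 k). change (j - m1 k < m2 k)%nat. lia.
      + replace j with (m1 k + m2 k)%nat by lia. rewrite Lmid by lia.
        replace (m1 k + m2 k - m1 k)%nat with (m2 k) by lia.
        destruct (HP2 k) as [_ [C _]]. assert (C' : c2 k (m2 k) = x) by exact C. rewrite C'.
        replace (S (m1 k + m2 k)) with (nn k) by (unfold nn; lia). rewrite Lend, d_refl. apply Hmu. }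
  exists (fun i => LL (fst (posf nn i)) (snd (posf nn i))). split; [|split].
  - intros K. destruct (pos_reach nn Hnn K) as [I HI]. exists I. intros i Hi.
    exists (fst (posf nn i)). split. pose proof (pos_mono nn Hnn I i Hi). rewrite HI in H. exact H.
    destruct (posf nn i) as [k j] eqn:E.
    destruct (pos_step nn Hnn i k j E) as [[A B]|[A B]]; rewrite A; simpl.
    + apply Lstep. lia.
    + rewrite L0, <- (Lend k), <- B. apply Lstep. lia.
  - intros I. destruct (pos_reach nn Hnn I) as [i Hi]. exists i. split.
    pose proof (pos_fst_le nn Hnn i). rewrite Hi in H. exact H. rewrite Hi. apply L0.
  - intros I. destruct (pos_reach nn Hnn I) as [i Hi]. exists (i + m1 I)%nat. split.
    pose proof (pos_fst_le nn Hnn i). rewrite Hi in H. simpl in H. lia.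
    rewrite (pos_within nn Hnn i I Hi (m1 I)) by (unfold nn; lia). apply Ly.
Qed.

Lemma ls_TD : limit_shadowing d f -> totally_disconnected d Om.
Proof.
  intros Hls C HCO HC x y Cx Cy. apply NNPP. intros Hxy.
  assert (Hr : 0 < d x y).
  { pose proof (d_pos x y). destruct (Req_dec (d x y) 0) as [E|E]. apply d_eq in E. contradiction. lra. }
  destruct (walk x y (fun k => / INR (S k))) as [b [Hb1 [Hbx Hby]]].
  - intros; apply inv_S_pos.
  - intros k. apply (chain_conn C); auto. apply inv_S_pos.
  - intros k. apply (chain_conn C); auto. apply inv_S_pos.
  - destruct (Hls (fun i => it i (b i))) as [w Hw].
    + intros e He0. destruct (eqc (e/2)) as [dl [Hdl [_ Hq]]]. lra.
      destruct (archi dl Hdl) as [K HK]. destruct (Hb1 K) as [I HI].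
      exists I. intros i Hi. destruct (HI i Hi) as [k [Hk Hd]].
      unfold R_dist. rewrite Rminus_0_r, Rabs_right by apply Rle_ge, d_pos.
      rewrite itS'. pose proof (inv_S_le K k Hk).
      pose proof (Hq (b i) (b (S i)) ltac:(lra) (S i)). lra.
    + destruct (sep_pts x y (HCO x Cx) (HCO y Cy) (d x y / 5)) as [th [Hth Hsep]]. lra.
      destruct (Hw th Hth) as [I HI].
      destruct (Hbx I) as [t1 [Ht1 Bt1]]. destruct (Hby I) as [t2 [Ht2 Bt2]].
      pose proof (HI t1 Ht1). pose proof (HI t2 Ht2). unfold R_dist in H, H0.
      rewrite Rminus_0_r, Rabs_right in H, H0 by apply Rle_ge, d_pos.
      rewrite Bt1 in H. rewrite Bt2 in H0.
      pose proof (Hsep w t1 t2 ltac:(lra) ltac:(lra)). lra.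
Qed.

Lemma clopen_inter (A : X -> Prop) (I : Type) (l : list I) (V : I -> X -> Prop) :
  (forall i, In i l -> rel_clopen d A (V i)) ->
  rel_clopen d A (fun z => A z /\ forall i, In i l -> V i z).
Proof.
  intros HV. split; [|split].
  - intros z [Az _]. exact Az.
  - intros z Az [_ Hz].
    destruct (list_min (fun i e => forall z', A z' -> d z z' < e -> V i z')) with (l := l)
      as [e [He0 Hq]].
    + intros i e e' H Hp Hle z' Az' Hd. apply H; auto. lra.
    + intros i Hi. destruct (HV i Hi) as [_ [Ho _]]. apply Ho; auto.
    + exists e. split. auto. intros z' Az' Hd. split. auto. intros i Hi. apply Hq; auto.
  - intros z Az Hz.
    assert (H : exists i, In i l /\ ~ V i z).
    { apply NNPP. intros Hn. apply Hz. split. auto. intros i Hi. apply NNPP. intro. apply Hn. eauto. }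
    destruct H as [i [Hi Hv]]. destruct (HV i Hi) as [_ [_ Hc']].
    destruct (Hc' z Az Hv) as [e [He0 Hq]]. exists e. split. auto.
    intros z' Az' Hd [_ Hall]. apply (Hq z' Az' Hd). apply Hall, Hi.
Qed.

Lemma clopen_avoid (A K : X -> Prop) x : closed K -> (forall y, K y -> A y) ->
  (forall y, K y -> exists W, rel_clopen d A W /\ W x /\ ~ W y) ->
  A x -> exists W, rel_clopen d A W /\ W x /\ forall z, W z -> ~ K z.
Proof.
  intros HK HKA HW Ax.
  destruct (choice_fun (fun y W => K y -> rel_clopen d A W /\ W x /\ ~ W y)) as [Wy HWy].
  { intros y. destruct (classic (K y)) as [Ky|Ky].
    - destruct (HW y Ky) as [W HW']. exists W. auto.
    - exists (fun _ => False). intros; contradiction. }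
  destruct (finite_cover K X (fun y z => K y /\ thick A (fun z => ~ Wy y z) z)) as [l Hl].
  - exact HK.
  - intros y. apply open_const_and, thick_open.
  - intros z Kz. exists z. split. auto. apply sub_thick.
    + destruct (HWy z Kz) as [[_ [_ Hc']] _]. exact Hc'.
    + apply HKA, Kz.
    + apply HWy, Kz.
  - exists (fun z => A z /\ forall y, In y l -> (fun y z => A z /\ (K y -> Wy y z)) y z).
    split; [|split].
    + apply clopen_inter. intros y _. destruct (classic (K y)) as [Ky|Ky].
      * destruct (HWy y Ky) as [[Hs [Ho Hc']] _]. split; [|split].
        -- intros z [Az _]. exact Az.
        -- intros z Az [_ Hz]. destruct (Ho z Az (Hz Ky)) as [e [He0 Hq]]. exists e. split. auto.
           intros z' Az' Hd. split. auto. intros _. apply Hq; auto.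
        -- intros z Az Hz. assert (~ Wy y z). { intro. apply Hz. split; auto. }
           destruct (Hc' z Az H) as [e [He0 Hq]]. exists e. split. auto.
           intros z' Az' Hd [_ H']. apply (Hq z' Az' Hd). auto.
      * split; [|split].
        -- intros z [Az _]. exact Az.
        -- intros z Az _. exists 1. split. lra. intros z' Az' _. split. auto. intros; contradiction.
        -- intros z Az Hz. exfalso. apply Hz. split. auto. intros; contradiction.
    + split. auto. intros y _. split. auto. intros Ky. apply HWy, Ky.
    + intros z [Az Hz] Kz. destruct (Hl z Kz) as [y [Hy [Ky Ht]]].
      apply (thick_sub A (fun z => ~ Wy y z) z Az Ht). apply (Hz y Hy). exact Ky.
Qed.

Lemma sep_closed (F1 F2 : X -> Prop) : closed F1 -> closed F2 -> (forall z, F1 z -> F2 z -> False) ->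
  exists r, 0 < r /\ forall a b, F1 a -> F2 b -> r <= d a b.
Proof.
  intros H1 H2 Hdis. apply NNPP. intros Hn.
  assert (H : forall n : nat, exists p : X * X, F1 (fst p) /\ F2 (snd p) /\ d (fst p) (snd p) < / INR (S n)).
  { intros n. apply NNPP. intros Hn2. apply Hn. exists (/ INR (S n)). split. apply inv_S_pos.
    intros a b Ha Hb. apply Rnot_lt_le. intro. apply Hn2. exists (a, b). auto. }
  destruct (choice_fun _ H) as [p Hp].
  destruct (cluster1 (fun n => fst (p n))) as [c Hc'].
  apply (Hdis c).
  - apply H1. intros r Hr. destruct (Hc' r Hr 0%nat) as [n [_ Hd]]. exists (fst (p n)). split. apply Hp. auto.
  - apply H2. intros r Hr. destruct (archi (r/2)) as [N HN]. lra.
    destruct (Hc' (r/2) ltac:(lra) N) as [n [Hn1 Hd]]. exists (snd (p n)). split. apply Hp.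
    destruct (Hp n) as [_ [_ Hd2]]. pose proof (inv_S_le N n Hn1).
    pose proof (d_tri c (fst (p n)) (snd (p n))). lra.
Qed.

Lemma closed_minus_open (A O : X -> Prop) : closed A -> is_open d O -> closed (fun z => A z /\ ~ O z).
Proof.
  intros HA HO c H. split.
  - apply HA. intros r Hr. destruct (H r Hr) as [a [[Aa _] Hd]]. eauto.
  - intros Oc. destruct (HO c Oc) as [e [He0 Hq]]. destruct (H e He0) as [a [[_ Na] Hd]].
    apply Na, Hq, Hd.
Qed.

Lemma ball_union_open (F : X -> Prop) r : is_open d (fun z => exists a, F a /\ d a z < r).
Proof.
  intros z [a [Fa Hd]]. exists (r - d a z). split. lra. intros y Hy. exists a. split. auto.
  pose proof (d_tri a z y). lra.
Qed.

Lemma dim0_TD : dim_zero d Om -> totally_disconnected d Om.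
Proof.
  intros HD C HCO HC x y Cx Cy. apply NNPP. intros Hxy.
  assert (Hr : 0 < d x y).
  { pose proof (d_pos x y). destruct (Req_dec (d x y) 0) as [E|E]. apply d_eq in E. contradiction. lra. }
  destruct (HD x (HCO x Cx) (d x y) Hr) as [W [[Hs [Ho Hc']] [Wx Hsm]]].
  destruct (HC W (fun z => ~ W z)) as [H|H].
  - intros z Cz Wz. destruct (Ho z (HCO z Cz) Wz) as [e [He0 Hq]]. exists e. split. auto.
    intros z' Cz' Hd. apply Hq; auto.
  - intros z Cz Wz. destruct (Hc' z (HCO z Cz) Wz) as [e [He0 Hq]]. exists e. split. auto.
    intros z' Cz' Hd. apply Hq; auto.
  - intros z _. apply classic.
  - intros z _ A B. auto.
  - pose proof (Hsm y (H y Cy)). lra.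
  - apply (H x Cx Wx).
Qed.

Section QC.
Variable x : X.
Hypothesis Hx : Om x.
Definition Qc z := Om z /\ forall W, rel_clopen d Om W -> W x -> W z.

Lemma Qc_closed : closed Qc.
Proof.
  intros c H. split.
  - apply Om_closed. intros r Hr. destruct (H r Hr) as [a [[Oa _] Hd]]. eauto.
  - intros W HW Wx. apply NNPP. intros Wc.
    assert (Oc : Om c). { apply Om_closed. intros r Hr. destruct (H r Hr) as [a [[Oa _] Hd]]. eauto. }
    pose proof HW as HW'. destruct HW as [_ [_ Hc']]. destruct (Hc' c Oc Wc) as [e [He0 Hq]].
    destruct (H e He0) as [a [[Oa Ha] Hd]]. apply (Hq a Oa Hd). apply Ha. exact HW'. exact Wx.
Qed.

Lemma closed_part (Q P1 P2 : X -> Prop) : closed Q -> rel_open d Q P2 ->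
  (forall z, Q z -> P1 z \/ P2 z) -> (forall z, Q z -> P1 z -> P2 z -> False) ->
  closed (fun z => Q z /\ P1 z).
Proof.
  intros HQ HP2 Hcov Hdis c H.
  assert (Qc' : Q c). { apply HQ. intros r Hr. destruct (H r Hr) as [a [[Qa _] Hd]]. eauto. }
  split. auto. destruct (Hcov c Qc') as [A|B]. auto.
  exfalso. destruct (HP2 c Qc' B) as [e [He0 Hq]]. destruct (H e He0) as [a [[Qa Pa] Hd]].
  apply (Hdis a Qa Pa). apply Hq; auto.
Qed.

Lemma Qc_aux (P1 P2 : X -> Prop) : rel_open d Qc P1 -> rel_open d Qc P2 ->
  (forall z, Qc z -> P1 z \/ P2 z) -> (forall z, Qc z -> P1 z -> P2 z -> False) ->
  P1 x -> forall z, Qc z -> P1 z.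
Proof.
  intros H1 H2 Hcov Hdis P1x z0 Qz0. apply NNPP. intros Nz0.
  assert (P2z0 : P2 z0). { destruct (Hcov z0 Qz0); tauto. }
  assert (F1c : closed (fun z => Qc z /\ P1 z)). { apply closed_part with P2; auto. exact Qc_closed. }
  assert (F2c : closed (fun z => Qc z /\ P2 z)).
  { apply closed_part with P1; auto. exact Qc_closed. intros z Qz. destruct (Hcov z Qz); auto.
    intros z Qz A B. apply (Hdis z Qz B A). }
  destruct (sep_closed _ _ F1c F2c) as [r [Hr Hsep]].
  { intros z [Qz A] [_ B]. apply (Hdis z Qz A B). }
  set (U := fun z => exists a, (Qc a /\ P1 a) /\ d a z < r/2).
  set (V := fun z => exists a, (Qc a /\ P2 a) /\ d a z < r/2).
  assert (UV : forall z, U z -> V z -> False).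
  { intros z [a [Fa Ha]] [b [Fb Hb]]. pose proof (Hsep a b Fa Fb). pose proof (d_tri a z b).
    rewrite (d_sym z b) in H0. lra. }
  assert (Qx : Qc x). { split. auto. auto. }
  destruct (clopen_avoid Om (fun z => (Om z /\ ~ U z) /\ ~ V z) x) as [W0 [[Hs [Ho Hc']] [W0x HW0]]].
  - apply closed_minus_open. apply closed_minus_open. exact Om_closed. apply ball_union_open. apply ball_union_open.
  - intros y [[Oy _] _]. exact Oy.
  - intros y [[Oy NU] NV]. apply NNPP. intros Hn.
    assert (Qy : Qc y). { split. auto. intros W HW Wx. apply NNPP. intro. apply Hn. exists W. auto. }
    destruct (Hcov y Qy) as [A|B].
    + apply NU. exists y. split. auto. rewrite d_refl. lra.
    + apply NV. exists y. split. auto. rewrite d_refl. lra.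
  - exact Hx.
  - assert (HW' : rel_clopen d Om (fun z => W0 z /\ U z)).
    { split; [|split].
      - intros z [Wz _]. apply Hs, Wz.
      - intros z Oz [Wz Uz]. destruct (Ho z Oz Wz) as [e1 [He1 Hq1]].
        destruct (ball_union_open _ (r/2) z Uz) as [e2 [He2 Hq2]].
        exists (Rmin e1 e2). split. apply Rmin_pos; auto. intros z' Oz' Hd.
        pose proof (Rmin_l e1 e2). pose proof (Rmin_r e1 e2). split. apply Hq1; auto; lra. apply Hq2. lra.
      - intros z Oz Hz. destruct (classic (W0 z)) as [Wz|Wz].
        + assert (Vz : V z). { apply NNPP. intro NV. apply (HW0 z Wz). repeat split; auto. }
          destruct (ball_union_open _ (r/2) z Vz) as [e [He0 Hq]]. exists e. split. auto.
          intros z' Oz' Hd [_ Uz']. apply (UV z'). auto. apply Hq, Hd.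
        + destruct (Hc' z Oz Wz) as [e [He0 Hq]]. exists e. split. auto.
          intros z' Oz' Hd [Wz' _]. apply (Hq z' Oz' Hd Wz'). }
    pose proof Qz0 as Qz0'. destruct Qz0 as [_ HQ]. destruct (HQ _ HW') as [_ Uz0].
    + split. exact W0x. exists x. split. exact (conj Qx P1x). rewrite d_refl. lra.
    + apply (UV z0 Uz0). exists z0. split. exact (conj Qz0' P2z0). rewrite d_refl. lra.
Qed.

Lemma Qc_conn : connected_set d Qc.
Proof.
  intros P1 P2 H1 H2 Hcov Hdis. assert (Qx : Qc x) by (split; auto).
  destruct (Hcov x Qx) as [A|B].
  - left. apply (Qc_aux P1 P2); auto.
  - right. apply (Qc_aux P2 P1); auto. intros z Qz. destruct (Hcov z Qz); auto.
    intros z Qz B' A'. apply (Hdis z Qz A' B').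
Qed.
End QC.

Lemma TD_dim0 : totally_disconnected d Om -> dim_zero d Om.
Proof.
  intros HTD x Ox e He0.
  assert (Hq : forall z, Qc x z -> z = x).
  { intros z Qz. apply (HTD (Qc x)). intros w [Ow _]. exact Ow. apply Qc_conn, Ox. exact Qz. split; auto. }
  destruct (clopen_avoid Om (fun y => Om y /\ e <= d x y) x) as [W [HW [Wx Hav]]].
  - intros c H. assert (Oc : Om c). { apply Om_closed. intros r Hr. destruct (H r Hr) as [a [[Oa _] Hd]]. eauto. }
    split. auto. apply Rnot_lt_le. intros Hlt. destruct (H (e - d x c)) as [a [[_ Ha] Hd]]. lra.
    pose proof (d_tri x c a). lra.
  - intros y [Oy _]. exact Oy.
  - intros y [Oy Hy]. apply NNPP. intros Hn.
    assert (Qy : Qc x y). { split. auto. intros W HW Wx. apply NNPP. intro. apply Hn. exists W. auto. }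
    apply Hq in Qy. subst. rewrite d_refl in Hy. lra.
  - exact Ox.
  - exists W. split. auto. split. auto. intros z Wz. apply Rnot_le_lt. intros Hle.
    apply (Hav z Wz). split. destruct HW as [Hs _]. apply Hs, Wz. exact Hle.
Qed.

Lemma Srel : dim_zero d Om -> forall e1, 0 < e1 -> exists S : X -> X -> Prop,
  (forall a b, S a b -> S b a) /\ (forall a b c, S a b -> S b c -> S a c) /\
  (forall a b, Om a -> Om b -> S a b -> d a b < e1) /\
  exists lam, 0 < lam /\ forall a b, Om a -> Om b -> d a b < lam -> S a b.
Proof.
  intros HD e1 He1.
  destruct (choice_fun (fun x W => Om x -> rel_clopen d Om W /\ W x /\ forall z, W z -> d x z < e1/2)) as [W HW].
  { intros x. destruct (classic (Om x)) as [Ox|Ox].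
    - destruct (HD x Ox (e1/2) ltac:(lra)) as [W HW]. exists W. auto.
    - exists (fun _ => False). intros; contradiction. }
  destruct (finite_cover Om X (fun x z => Om x /\ thick Om (W x) z)) as [l Hl].
  - exact Om_closed.
  - intros x. apply open_const_and, thick_open.
  - intros z Oz. exists z. split. auto. apply sub_thick; auto.
    + destruct (HW z Oz) as [[_ [Ho _]] _]. exact Ho.
    + apply HW, Oz.
  - set (SS := fun a b => forall x, In x l -> ((Om x /\ W x a) <-> (Om x /\ W x b))).
    assert (Sopen : forall c, Om c -> exists r, 0 < r /\ forall z, Om z -> d c z < r -> SS c z).
    { intros c Oc.
      destruct (list_min (fun x r => forall z, Om z -> d c z < r -> ((Om x /\ W x c) <-> (Om x /\ W x z)))) with (l := l)
        as [r [Hr Hq]].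
      - intros x r r' H Hp Hle z Oz Hd. apply H; auto. lra.
      - intros x _. destruct (classic (Om x)) as [Ox|Ox].
        + destruct (HW x Ox) as [[_ [Ho Hc']] _]. destruct (classic (W x c)) as [Wc|Wc].
          * destruct (Ho c Oc Wc) as [r [Hr Hq]]. exists r. split. auto. intros z Oz Hd.
            pose proof (Hq z Oz Hd). tauto.
          * destruct (Hc' c Oc Wc) as [r [Hr Hq]]. exists r. split. auto. intros z Oz Hd.
            pose proof (Hq z Oz Hd). tauto.
        + exists 1. split. lra. intros. tauto.
      - exists r. split. auto. intros z Oz Hd x Hx. apply Hq; auto. }
    exists SS. split; [|split; [|split]].
    + intros a b H x Hx. specialize (H x Hx). tauto.
    + intros a b c H1 H2 x Hx. specialize (H1 x Hx). specialize (H2 x Hx). tauto.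
    + intros a b Oa Ob Sab. destruct (Hl a Oa) as [x [Hx [Ox Ht]]].
      pose proof (thick_sub _ _ _ Oa Ht) as Wa. destruct (proj1 (Sab x Hx) (conj Ox Wa)) as [_ Wb].
      destruct (HW x Ox) as [_ [_ Hs]]. pose proof (Hs a Wa). pose proof (Hs b Wb).
      pose proof (d_tri a x b). rewrite (d_sym a x) in H1. lra.
    + apply NNPP. intros Hn.
      assert (H : forall n : nat, exists p : X * X, Om (fst p) /\ Om (snd p) /\ d (fst p) (snd p) < / INR (S n) /\ ~ SS (fst p) (snd p)).
      { intros n. apply NNPP. intros Hn2. apply Hn. exists (/ INR (S n)). split. apply inv_S_pos.
        intros a b Oa Ob Hd. apply NNPP. intro. apply Hn2. exists (a, b). auto. }
      destruct (choice_fun _ H) as [p Hp].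
      destruct (cluster1 (fun n => fst (p n))) as [c Hc'].
      assert (Oc : Om c).
      { apply Om_closed. intros r Hr. destruct (Hc' r Hr 0%nat) as [n [_ Hd]]. exists (fst (p n)). split. apply Hp. auto. }
      destruct (Sopen c Oc) as [r [Hr Hq]].
      destruct (archi (r/2)) as [N HN]. lra.
      destruct (Hc' (r/2) ltac:(lra) N) as [n [Hn1 Hd]].
      destruct (Hp n) as [Oa [Ob [Hab NS]]]. pose proof (inv_S_le N n Hn1).
      apply NS. intros x Hx. pose proof (Hq (fst (p n)) Oa ltac:(lra) x Hx).
      pose proof (d_tri c (fst (p n)) (snd (p n))).
      pose proof (Hq (snd (p n)) Ob ltac:(lra) x Hx). tauto.
Qed.

Lemma Trel : dim_zero d Om -> forall e1, 0 < e1 -> exists T : X -> X -> Prop,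
  (forall a b, T a b -> T b a) /\ (forall a b c, T a b -> T b c -> T a c) /\
  (forall a b, Om a -> Om b -> T a b -> d a b < e1) /\
  (forall a b, T a b -> T (f a) (f b)) /\
  exists lam, 0 < lam /\ forall a b, Om a -> Om b -> d a b < lam -> T a b.
Proof.
  intros HD e1 He1. destruct (Srel HD e1 He1) as [S [Ss [St [Sd [lam [Hlam Sl]]]]]].
  exists (fun a b => forall k, S (it k a) (it k b)). split; [|split; [|split; [|split]]].
  - intros a b H k. apply Ss, H.
  - intros a b c H1 H2 k. eapply St; eauto.
  - intros a b Oa Ob H. apply (Sd a b Oa Ob (H 0%nat)).
  - intros a b H k. rewrite !itS. apply H.
  - destruct (eqc (lam/2)) as [dl [Hdl [_ Hq]]]. lra.
    exists dl. split. auto. intros a b Oa Ob Hd k. apply Sl. apply Om_it, Oa. apply Om_it, Ob.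
    pose proof (Hq a b ltac:(lra) k). lra.
Qed.

Lemma core : dim_zero d Om -> forall e, 0 < e -> exists dl N, 0 < dl /\
  forall z, pseudo_orbit d f dl z ->
  (forall i, (i <= N)%nat -> d (z i) (it i (z 0%nat)) <= e) /\
  exists p, Om p /\ (forall k, d (z (k + N)%nat) (it k p) <= e/2) /\
            (forall k, d (it (k + N) (z 0%nat)) (it k p) <= e/2).
Proof.
  intros HD e He0.
  destruct (Trel HD (e/4) ltac:(lra)) as [T [Ts [Tt [Td [Tf [lam [Hlam Tl]]]]]]].
  destruct (eqc (lam/4)) as [u [Hu [Hule Hqu]]]. lra.
  destruct (eqc (e/2)) as [v [Hv [Hvle Hqv]]]. lra.
  set (g := Rmin (Rmin (u/2) v) (e/8)).
  assert (Hg : 0 < g). { unfold g. repeat apply Rmin_pos; lra. }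
  assert (Hg1 : g <= u/2). { unfold g. pose proof (Rmin_l (Rmin (u/2) v) (e/8)). pose proof (Rmin_l (u/2) v). lra. }
  assert (Hg2 : g <= v). { unfold g. pose proof (Rmin_l (Rmin (u/2) v) (e/8)). pose proof (Rmin_r (u/2) v). lra. }
  assert (Hg3 : g <= e/8). { unfold g. apply Rmin_r. }
  destruct (attract g Hg) as [N HN].
  assert (HNp : 0 < INR N + 1). { pose proof (pos_INR N). lra. }
  set (eta := g / (INR N + 1)).
  assert (Heta : 0 < eta). { unfold eta. apply Rdiv_lt_0_compat; lra. }
  assert (HetaN : INR N * eta = g - eta). { unfold eta. field. lra. }
  destruct (drift eta Heta) as [dl0 [Hdl0 Hdr]].
  exists (Rmin dl0 (lam/4)), N. split. apply Rmin_pos; lra.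
  intros z Hz.
  assert (Hz0 : pseudo_orbit d f dl0 z). { intros i. pose proof (Rmin_l dl0 (lam/4)). pose proof (Hz i). lra. }
  assert (Hz1 : forall i, d (f (z i)) (z (S i)) <= lam/4). { intros i. pose proof (Rmin_r dl0 (lam/4)). pose proof (Hz i). lra. }
  pose proof (Hdr z Hz0) as DR.
  assert (Dk : forall i, d (z (N + i)%nat) (it N (z i)) < g).
  { intros i. pose proof (DR N i). lra. }
  destruct (HN (z 0%nat)) as [p0 [Op0 Hp0]].
  assert (Claim : forall k, exists p, Om p /\ d (z (N + k)%nat) p < 2 * g /\ T p (it k p0)).
  { induction k as [|k [p [Op [Hpd Tp]]]].
    - exists p0. split. auto. split.
      + pose proof (Dk 0%nat). pose proof (d_tri (z (N + 0)%nat) (it N (z 0%nat)) p0). lra.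
      + apply Tl; auto. rewrite d_refl. lra.
    - destruct (HN (z (S k))) as [p' [Op' Hp']]. exists p'. split. auto.
      assert (H1 : d (z (N + S k)%nat) p' < 2 * g).
      { pose proof (Dk (S k)). pose proof (d_tri (z (N + S k)%nat) (it N (z (S k))) p'). lra. }
      split. auto.
      assert (H2 : T p' (f p)).
      { apply Tl; auto. apply Om_inv, Op.
        pose proof (Hz1 (N + k)%nat). replace (S (N + k)) with (N + S k)%nat in H by lia.
        pose proof (Hqu (z (N + k)%nat) p ltac:(lra) 1%nat). simpl in H0.
        pose proof (d_tri p' (z (N + S k)%nat) (f p)).
        pose proof (d_tri (z (N + S k)%nat) (f (z (N + k)%nat)) (f p)).
        pose proof (d_sym p' (z (N + S k)%nat)). pose proof (d_sym (z (N + S k)%nat) (f (z (N + k)%nat))). lra. }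
      eapply Tt. exact H2. apply Tf, Tp. }
  split.
  - intros i Hi. pose proof (DR i 0%nat). rewrite Nat.add_0_r in H.
    assert (INR i * eta <= INR N * eta). { apply Rmult_le_compat_r. lra. apply le_INR, Hi. }
    lra.
  - exists p0. split. auto. split.
    + intros k. destruct (Claim k) as [p [Op [Hpd Tp]]]. rewrite Nat.add_comm.
      pose proof (Td p (it k p0) Op (Om_it k p0 Op0) Tp). pose proof (d_tri (z (N + k)%nat) p (it k p0)). lra.
    + intros k. rewrite <- itP. apply Hqv. lra.
Qed.

Lemma dim0_sh : dim_zero d Om -> shadowing d f.
Proof.
  intros HD e He0. destruct (core HD e He0) as [dl [N [Hdl H]]]. exists dl. split. auto.
  intros z Hz. destruct (H z Hz) as [H1 [p [Op [H2 H3]]]]. exists (z 0%nat). intros i.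
  destruct (Nat.le_gt_cases i N) as [Hi|Hi]. apply H1, Hi.
  replace i with ((i - N) + N)%nat by lia. pose proof (H2 (i - N)%nat). pose proof (H3 (i - N)%nat).
  pose proof (d_tri (z (i - N + N)%nat) (it (i - N) p) (it (i - N + N) (z 0%nat))).
  rewrite (d_sym (it (i - N) p)) in H5. lra.
Qed.

Lemma dim0_ls : dim_zero d Om -> limit_shadowing d f.
Proof.
  intros HD z Hz.
  assert (Claim : forall j : nat, exists q : X * nat, forall i, (snd q <= i)%nat -> d (z i) (it i (fst q)) <= / INR (S j)).
  { intros j. destruct (core HD (/ INR (S j)) (inv_S_pos j)) as [dl [N [Hdl H]]].
    destruct (Hz dl Hdl) as [M0 HM0].
    assert (PO : pseudo_orbit d f dl (fun j => z (j + M0)%nat)).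
    { intros i. pose proof (HM0 (i + M0)%nat ltac:(lia)). unfold R_dist in H0.
      rewrite Rminus_0_r, Rabs_right in H0 by apply Rle_ge, d_pos. simpl. lra. }
    destruct (H _ PO) as [_ [p [Op [H2 _]]]].
    destruct (Om_surj_it (N + M0) p Op) as [y [Oy Ey]].
    exists (y, (N + M0)%nat). cbn [fst snd]. intros i Hi.
    pose proof (H2 (i - (N + M0))%nat) as H0. cbv beta in H0.
    assert (E1 : (i - (N + M0) + N + M0)%nat = i) by lia. rewrite E1 in H0.
    assert (E2 : it i y = it (i - (N + M0)) p). { rewrite <- Ey, itP. f_equal. lia. }
    rewrite E2. pose proof (inv_S_pos j). lra. }
  destruct (choice_fun _ Claim) as [Q HQ].
  destruct (cluster1 (fun j => fst (Q j))) as [c Hc'].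
  exists c. intros e He0.
  destruct (eqc (e/2)) as [th [Hth [_ Hq]]]. lra.
  destruct (archi (e/2)) as [j0 Hj0]. lra.
  destruct (Hc' th Hth j0) as [j [Hj Hd]].
  exists (snd (Q j)). intros i Hi. unfold R_dist. rewrite Rminus_0_r, Rabs_right by apply Rle_ge, d_pos.
  pose proof (HQ j i Hi). pose proof (inv_S_le j0 j Hj).
  pose proof (Hq c (fst (Q j)) ltac:(lra) i).
  pose proof (d_tri (z i) (it i (fst (Q j))) (it i c)). rewrite (d_sym (it i (fst (Q j)))) in H2. lra.
Qed.

Lemma main_all :
  (limit_shadowing d f <-> shadowing d f) /\
  (shadowing d f <-> dim_zero d Om) /\
  (dim_zero d Om <-> totally_disconnected d Om).
Proof.
  split; [|split]; split; intros H.
  - apply dim0_sh, TD_dim0, ls_TD, H.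
  - apply dim0_ls, TD_dim0, sh_TD, H.
  - apply TD_dim0, sh_TD, H.
  - apply dim0_sh, H.
  - apply dim0_TD, H.
  - apply TD_dim0, H.
Qed.
End Main.

Theorem theorem1p2 (X : Type) (d : X -> X -> R)
  (Hmetric : is_metric d) (Hcompact : compact_space d)
  (f : X -> X) (Hequi : equicontinuous d f) :
  (limit_shadowing d f <-> shadowing d f) /\
  (shadowing d f <-> dim_zero d (nonwandering d f)) /\
  (dim_zero d (nonwandering d f) <-> totally_disconnected d (nonwandering d f)).
Proof.
  exact (main_all X d Hmetric Hcompact f Hequi).
Qed.
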